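(* The mixed dual estimate $\check{\Sigma}$ in the model $B(\check G) \cap M(G)$ is identical to the mixed dual estimate in the model ${\rm M}_+(G)=A(G)\cap M(G)$.
   Context: Let $G=(V,E)$ be an undirected graph on $V=\{1,\ldots,d\}$, $S$ a sample covariance matrix, $M(G)$ the Gaussian graphical model ($(\Sigma^{-1})_{ij}=0$ for $ij\notin E$), $A(G)$ the set of positive definite $\Sigma$ with $\Sigma_{ij}\ge 0$ for $ij\in E$, and ${\rm M}_+(G)=A(G)\cap M(G)$. Let $\widehat K$ be the MLE of $K=\Sigma^{-1}$ in $M(G)$, and let $\check\Sigma$ (the mixed dual estimate in ${\rm M}_+(G)$) be the minimizer of $-\log\det\Sigma+\operatorname{tr}(\Sigma\widehat K)$ over positive definite $\Sigma$ with $\Sigma_{ij}\geq 0$ for $ij\in E(G)$. Let $\check G$ be the graph whose edges are the pairs $ij$ with $\check\Sigma_{ij}\neq 0$. For a graph $H$, $B(H)$ denotes the covariance graph model of all covariance matrices with $\Sigma_{ij}=0$ for $ij\notin E(H)$. The mixed dual estimate in $B(\check G)\cap M(G)$ is obtained by first computing $\widehat K$ in $M(G)$ and then computing the dual likelihood estimate in $B(\check G)$ based on $\widehat K$ (minimizing $-\log\det\Sigma+\operatorname{tr}(\Sigma\widehat K)$ over $\Sigma\in B(\check G)$). *)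

(* Defs.v *)
From mathcomp Require Import all_boot all_order all_algebra.
From mathcomp Require Import reals exp.
Set Implicit Arguments. Unset Strict Implicit. Unset Printing Implicit Defensive.
Import Order.TTheory GRing.Theory Num.Theory.
Local Open Scope ring_scope.

Section Defs.
Variables (R : realType) (d : nat).

Definition posdef (A : 'M[R]_d) : Prop :=
  A^T = A /\ forall v : 'cV[R]_d, v != 0 -> 0 < (v^T *m A *m v) ord0 ord0.

Definition possemidef (A : 'M[R]_d) : Prop :=
  A^T = A /\ forall v : 'cV[R]_d, 0 <= (v^T *m A *m v) ord0 ord0.

(* an undirected graph on {1..d} = 'I_d given by a symmetric edge relation;
   only off-diagonal pairs i != j are considered as (potential) edges *)
Definition undirected (E : rel 'I_d) : Prop := forall i j, E i j = E j i.

Definition zero_pattern (E : rel 'I_d) (A : 'M[R]_d) : Prop :=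
  forall i j, i != j -> ~~ E i j -> A i j = 0.

Definition in_M (E : rel 'I_d) (Sigma : 'M[R]_d) : Prop :=
  posdef Sigma /\ zero_pattern E (invmx Sigma).

Definition in_A (E : rel 'I_d) (Sigma : 'M[R]_d) : Prop :=
  posdef Sigma /\ forall i j, i != j -> E i j -> 0 <= Sigma i j.

Definition in_B (H : rel 'I_d) (Sigma : 'M[R]_d) : Prop :=
  posdef Sigma /\ zero_pattern H Sigma.

(* Gaussian log-likelihood (up to constants) in K *)
Definition loglik (S K : 'M[R]_d) : R := ln (\det K) - \tr (S *m K).

Definition dual_obj (K Sigma : 'M[R]_d) : R := - ln (\det Sigma) + \tr (Sigma *m K).

Definition is_argmin (T : Type) (P : T -> Prop) (f : T -> R) (x : T) : Prop :=
  P x /\ forall y, P y -> f x <= f y.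

Definition is_MLE_M (E : rel 'I_d) (S Khat : 'M[R]_d) : Prop :=
  posdef Khat /\ zero_pattern E Khat /\
  forall K, posdef K -> zero_pattern E K -> loglik S K <= loglik S Khat.

Definition supp_graph (A : 'M[R]_d) : rel 'I_d :=
  fun i j => (i != j) && (A i j != 0).

End Defs.

(* Main.v *)
Require Import Defs.
From mathcomp Require Import all_boot all_order all_algebra.
From mathcomp Require Import reals exp.
From mathcomp Require Import complex spectral sesquilinear.
From mathcomp Require Import ring lra.
Import Order.TTheory GRing.Theory Num.Theory Num.Def.
Local Open Scope ring_scope.
Set Implicit Arguments. Unset Strict Implicit. Unset Printing Implicit Defensive.

Section Helpers.
Variables (R : realType) (d : nat).
Local Notation C := (R[i]).
Local Notation c := (real_complex R).

Lemma EPR (N : 'M[R]_d) (a : R) (w : 'rV[C]_d) : w != 0 ->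
  w *m map_mx c N = (c a) *: w -> exists2 v : 'rV[R]_d, v != 0 & v *m N = a *: v.
Proof.
move=> w0 hw.
have ev : eigenvalue (map_mx c N) (c a) by apply/eigenvalueP; exists w.
have : root (char_poly N) a.
  by rewrite -(fmorph_root c) map_char_poly -eigenvalue_root_char.
by rewrite -eigenvalue_root_char => /eigenvalueP [v hv v0]; exists v.
Qed.

Lemma posdef_row (A : 'M[R]_d) : posdef A ->
  forall v : 'rV_d, v != 0 -> 0 < (v *m A *m v^T) 0 0.
Proof.
move=> [_ hA] v v0; have := hA v^T; rewrite trmxK; apply.
by apply: contraNneq v0 => /(congr1 trmx); rewrite trmxK trmx0 => ->.
Qed.

Lemma pos_eig (M X : 'M[R]_d) : posdef M -> posdef X -> M \in unitmx ->
  forall a (v : 'rV[R]_d), v != 0 -> v *m (invmx M *m X) = a *: v -> 0 < a.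
Proof.
move=> pM pX uM a v v0 hv.
set u := v *m invmx M.
have vE : v = u *m M by rewrite /u mulmxKV.
have u0 : u != 0 by apply: contraNneq v0 => u0; rewrite vE u0 mul0mx.
have huX : u *m X = a *: (u *m M) by rewrite /u -mulmxA hv -vE.
have := posdef_row pX u0; rewrite huX -!scalemxAl mxE.
by rewrite pmulr_lgt0 // posdef_row.
Qed.

Lemma posdef1 : posdef (1%:M : 'M[R]_d).
Proof.
split; first by rewrite trmx1.
move=> v v0; rewrite mulmx1 mxE.
have : exists j, v j 0 != 0.
  apply/existsP; apply: contraNT v0 => /existsPn h.
  by apply/eqP/matrixP => i j; rewrite ord1 mxE; apply/eqP/negPn/h.
case=> j hj.
rewrite lt_def psumr_neq0; last by move=> i _; rewrite mxE -expr2 sqr_ge0.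
apply/andP; split; last by apply: sumr_ge0 => i _; rewrite mxE -expr2 sqr_ge0.
apply/hasP; exists j; first by rewrite mem_index_enum.
by rewrite mxE -expr2 lt_def sqr_ge0 andbT sqrf_eq0.
Qed.


Lemma row_unit_neq0 (F : fieldType) n (U : 'M[F]_n) i : U \in unitmx -> row i U != 0.
Proof.
move=> uU; apply/eqP => h.
have := congr1 (fun A : 'rV[F]_n => A 0 i) (row_mul i U (invmx U)).
rewrite h mul0mx mulmxV // !mxE eqxx /= => /eqP; by rewrite oner_eq0.
Qed.

Lemma eigrow (F : fieldType) n (V H : 'M[F]_n) (D : 'rV_n) : V \in unitmx ->
  H = invmx V *m diag_mx D *m V -> forall i, row i V *m H = D 0 i *: row i V.
Proof.
move=> uV -> i; rewrite -!row_mul !mulmxA mulmxV // mul1mx row_mul row_diag_mx.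
by rewrite -scalemxAl -rowE.
Qed.

Lemma herm_c (A : 'M[R]_d) : A^T = A -> map_mx c A \is hermsymmx.
Proof.
move=> hA; apply/is_hermitianmxP; rewrite expr0 scale1r.
apply/matrixP => i j; rewrite !mxE.
rewrite conj_Creal; last by rewrite complex_real.
by rewrite -{1}hA mxE.
Qed.

Lemma spec_herm (H : 'M[C]_d) : H \is hermsymmx -> exists V : 'M[C]_d, exists l : 'I_d -> R,
  [/\ V \is unitarymx, V \in unitmx & H = invmx V *m diag_mx (\row_i c (l i)) *m V].
Proof.
move=> hH.
have eH := elimT (@orthomx_spectralP _ _ H) (hermitian_normalmx hH).
have Dr := hermitian_spectral_diag_real hH.
exists (spectralmx H), (fun i => complex.Re (spectral_diag H 0 i)); split.
- exact: spectral_unitarymx.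
- exact: spectral_unit.
rewrite {1}eH; congr (_ *m diag_mx _ *m _).
apply/rowP => i; rewrite mxE RRe_real //.
by move/mxOverP: Dr; apply.
Qed.

Lemma spec_pd (A : 'M[R]_d) : posdef A -> exists U : 'M[C]_d, exists l : 'I_d -> R,
  [/\ U \is unitarymx, U \in unitmx, map_mx c A = invmx U *m diag_mx (\row_i c (l i)) *m U & forall i, 0 < l i].
Proof.
move=> pA; have [V [l [unV uV eA]]] := spec_herm (herm_c pA.1).
exists V, l; split => // i.
have := eigrow uV eA i; rewrite mxE => /(EPR (row_unit_neq0 i uV)) [v v0 hv].
apply: (pos_eig posdef1 pA (unitmx1 _ _) v0).
by rewrite invmx1 mul1mx.
Qed.


Lemma decomp (M X : 'M[R]_d) : posdef M -> M \in unitmx -> posdef X ->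
  exists r : 'I_d -> R, [/\ forall i, 0 < r i,
     \det (invmx M *m X) = \prod_i r i,
     \tr (invmx M *m X) = \sum_i r i &
     ((forall i, r i = 1) -> X = M)].
Proof.
move=> pM uM pX.
have [U [l [unU uU eM lpos]]] := spec_pd pM.
set Mc := map_mx c M; set Xc := map_mx c X.
have uMc : Mc \in unitmx by rewrite map_unitmx.
pose s i := c ((Num.sqrt (l i))^-1).
pose Ds := diag_mx (\row_i s i).
pose S := Ds *m U; pose T := invmx U *m Ds.
have DsDsL : Ds *m Ds *m diag_mx (\row_i c (l i)) = 1%:M.
  rewrite !mulmx_diag -diag_const_mx; congr diag_mx; apply/rowP => i; rewrite !mxE.
  rewrite /s -!rmorphM /= -(rmorph1 c); congr (c _).
  have sq := sqr_sqrtr (ltW (lpos i)).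
  have sp : Num.sqrt (l i) != 0 by rewrite gt_eqF // sqrtr_gt0.
  rewrite -{3}sq; field; exact: sp.
have eTS : T *m S = invmx Mc.
  have h : T *m S *m Mc = 1%:M.
    rewrite /Mc eM /T /S !mulmxA (mulmxK uU) -!mulmxA (mulmxA Ds Ds) (mulmxA (Ds *m Ds)).
    by rewrite DsDsL mul1mx mulVmx.
  by rewrite -[T *m S](mulmxK uMc) h mul1mx.
have eST : map_mx conjC (S^T) = T.
  rewrite /S /T trmx_mul map_mxM (invmx_unitary unU); congr (_ *m _).
  rewrite tr_diag_mx map_diag_mx; congr diag_mx; apply/rowP => i; rewrite !mxE.
  by apply/CrealP; rewrite /s complex_real.
have eTT : map_mx conjC (T^T) = S by rewrite -eST trmxCK.
have hXe : map_mx conjC (Xc^T) = Xc.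
  by have := is_hermitianmxP _ _ _ (herm_c pX.1); rewrite expr0 scale1r => <-.
clearbody S T.
pose Cm := S *m Xc *m T.
have hC : Cm \is hermsymmx.
  apply/is_hermitianmxP; rewrite expr0 scale1r /Cm !trmx_mul !map_mxM eTT hXe eST.
  by rewrite mulmxA.
have [V [mu [_ uV eC]]] := spec_herm hC.
have /andP [uT uS] : (T \in unitmx) && (S \in unitmx).
  by rewrite -unitmx_mul eTS unitmx_inv.
pose Q := T *m invmx V; pose Qi := V *m invmx T.
have QQi : Q *m Qi = 1%:M by rewrite /Q /Qi mulmxA (mulmxKV uV) mulmxV.
have QiQ : Qi *m Q = 1%:M by rewrite /Q /Qi mulmxA (mulmxKV uT) mulmxV.
have eN' : map_mx c (invmx M *m X) = T *m Cm *m invmx T.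
  by rewrite map_mxM map_invmx -/Mc -/Xc -eTS /Cm !mulmxA mulmxK.
clearbody Cm.
have eN : map_mx c (invmx M *m X) = Q *m diag_mx (\row_i c (mu i)) *m Qi.
  by rewrite eN' eC /Q /Qi !mulmxA.
clearbody Q Qi.
have mupos : forall i, 0 < mu i.
  move=> i; have := eigrow uV eC i; rewrite mxE => er.
  set w := row i V *m invmx T.
  have w0 : w != 0.
    apply: contraNneq (row_unit_neq0 i uV) => h.
    by rewrite -(mulmxKV uT (row i V)) -/w h mul0mx.
  have hw : w *m map_mx c (invmx M *m X) = c (mu i) *: w.
    by rewrite eN' /w !mulmxA (mulmxKV uT) er -scalemxAl.
  have [v v0 hv] := EPR w0 hw.
  exact: (pos_eig pM pX uM v0 hv).
exists mu; split => //.
- apply: complexI; rewrite -det_map_mx eN !det_mulmx mulrC mulrA -det_mulmx QiQ det1 mul1r.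
  by rewrite det_diag rmorph_prod; apply: eq_bigr => i _; rewrite mxE.
- apply: complexI; rewrite -trace_map_mx eN mxtrace_mulC mulmxA QiQ mul1mx mxtrace_diag.
  by rewrite raddf_sum; apply: eq_bigr => i _; rewrite mxE.
- move=> h1.
  have : map_mx c (invmx M *m X) = 1%:M.
    rewrite eN; have -> : \row_i c (mu i) = const_mx 1.
      by apply/rowP => i; rewrite !mxE h1 rmorph1.
    by rewrite diag_const_mx mulmx1 QQi.
  rewrite -(map_mx1 c) => /map_mx_inj h.
  by rewrite -(mulKVmx uM X) h mulmx1.
Qed.


Lemma posdef_det (A : 'M[R]_d) : posdef A -> 0 < \det A.
Proof.
move=> pA; have [r [rp hdet _ _]] := decomp posdef1 (unitmx1 _ _) pA.
by move: hdet; rewrite invmx1 mul1mx => ->; apply: prodr_gt0 => i _.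
Qed.

Lemma posdef_unit (A : 'M[R]_d) : posdef A -> A \in unitmx.
Proof. by move=> pA; rewrite unitmxE unitfE gt_eqF // posdef_det. Qed.

Lemma ln_prod (r : 'I_d -> R) : (forall i, 0 < r i) ->
  ln (\prod_i r i) = \sum_i ln (r i).
Proof.
move=> rp.
pose K := fun (a : R) (b : R) => 0 < b /\ ln b = a.
have : K (\sum_i ln (r i)) (\prod_i r i).
  apply: big_rec2 => [|i a b _ [bp lb]]; first by split; [exact: ltr01 | exact: ln1].
  by split; [rewrite mulr_gt0 | rewrite lnM ?posrE // lb].
by case.
Qed.

Lemma ln_le (x : R) : 0 < x -> ln x <= x - 1.
Proof.
move=> x0; have := @le_ln1Dx R (x - 1).
by rewrite addrCA subrr addr0; apply; lra.
Qed.

Lemma ln_lt (x : R) : 0 < x -> x != 1 -> ln x < x - 1.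
Proof.
move=> x0 x1; set y := Num.sqrt x.
have y0 : 0 < y by rewrite sqrtr_gt0.
have xy : x = y * y by rewrite -expr2 sqr_sqrtr // ltW.
have y1 : y != 1 by apply: contraNneq x1 => h; rewrite xy h mulr1.
have ly : ln x = ln y + ln y by rewrite xy lnM ?posrE.
have := ln_le y0.
have : 0 < (y - 1) ^+ 2 by rewrite exprn_even_gt0 // subr_eq0.
have e : (y - 1) ^+ 2 = y * y - 2 * y + 1 by ring.
rewrite e ly xy => h1 h2; lra.
Qed.

Lemma G_le (M X : 'M[R]_d) : posdef M -> posdef X ->
  ln (\det X) - ln (\det M) <= \tr (invmx M *m X) - d%:R /\
  (X != M -> ln (\det X) - ln (\det M) < \tr (invmx M *m X) - d%:R).
Proof.
move=> pM pX; have uM := posdef_unit pM.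
have [r [rp hdet htr h1]] := decomp pM uM pX.
have e1 : ln (\det X) - ln (\det M) = \sum_i ln (r i).
  rewrite -ln_prod // -hdet det_mulmx det_inv mulrC -ln_div ?posrE ?posdef_det //.
have e2 : \tr (invmx M *m X) - d%:R = \sum_i (r i - 1).
  by rewrite htr sumrB sumr_const card_ord.
rewrite e1 e2; split; first by apply: ler_sum => i _; apply: ln_le.
move=> XM; have [i ri] : exists i, r i != 1.
  apply/existsP; apply: contraNT XM => /existsPn h; apply/eqP/h1 => i.
  exact/eqP/negPn/h.
rewrite (bigD1 i) //= [X in _ < X](bigD1 i) //=.
by apply: ltr_leD; [apply: ln_lt | apply: ler_sum => j _; apply: ln_le].
Qed.

Lemma posdef_comb (A B : 'M[R]_d) a b : posdef A -> posdef B ->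
  0 <= a -> 0 <= b -> 0 < a + b -> posdef (a *: A + b *: B).
Proof.
move=> [tA pA] [tB pB] a0 b0 ab; split.
  by rewrite linearD !linearZ /= tA tB.
move=> v v0; have := pA v v0; have := pB v v0.
rewrite mulmxDr mulmxDl -!scalemxAr -!scalemxAl.
move: (v^T *m A *m v) (v^T *m B *m v) => P Q hQ hP; rewrite !mxE.
have [a0'|an0] := eqVneq a 0.
  by move: ab; rewrite a0' !mul0r !add0r => ab; rewrite mulr_gt0.
have ap : 0 < a by rewrite lt_def an0.
apply: ltr_pwDl; first by rewrite mulr_gt0.
by rewrite mulr_ge0 // ltW.
Qed.

Lemma concav (A B : 'M[R]_d) t : posdef A -> posdef B -> 0 < t < 1 ->
  let M := (1 - t) *: A + t *: B in
  (1 - t) * ln (\det A) + t * ln (\det B) <= ln (\det M) /\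
  (A != B -> (1 - t) * ln (\det A) + t * ln (\det B) < ln (\det M)).
Proof.
move=> pA pB /andP [t0 t1] M.
have pM : posdef M by apply: posdef_comb => //; [rewrite subr_ge0 ltW | rewrite ltW | rewrite subrK].
have uM := posdef_unit pM.
have [GA GA'] := G_le pM pA; have [GB GB'] := G_le pM pB.
have etr : (1 - t) * \tr (invmx M *m A) + t * \tr (invmx M *m B) = d%:R.
  rewrite -!mxtraceZ -mxtraceD scalemxAr -[in RHS](mxtrace1 R d).
  by rewrite (scalemxAr t) -mulmxDr mulVmx.
have t1' : 0 < 1 - t by rewrite subr_gt0.
split.
  have h1 := ler_wpM2l (ltW t1') GA; have h2 := ler_wpM2l (ltW t0) GB.
  nra.
move=> AB.
have AM : A != M.
  apply: contraNneq AB => AM.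
  have e1 : t *: A = A - (1 - t) *: A by rewrite scalerBl scale1r opprB addrC subrK.
  have e2 : t *: A = t *: B by rewrite e1 {1}AM /M addrAC subrr add0r.
  by rewrite -[A]scale1r -(mulVf (lt0r_neq0 t0)) -scalerA e2 scalerA mulVf ?scale1r // lt0r_neq0.
have h1 : (1 - t) * (ln (\det A) - ln (\det M)) < (1 - t) * (\tr (invmx M *m A) - d%:R).
  by rewrite ltr_pM2l // GA'.
have h2 := ler_wpM2l (ltW t0) GB.
nra.
Qed.


Lemma fconv (K A B : 'M[R]_d) t : posdef A -> posdef B -> 0 < t < 1 ->
  dual_obj K ((1 - t) *: A + t *: B) <= (1 - t) * dual_obj K A + t * dual_obj K B /\
  (A != B -> dual_obj K ((1 - t) *: A + t *: B) < (1 - t) * dual_obj K A + t * dual_obj K B).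
Proof.
move=> pA pB ht; have [c1 c2] := concav pA pB ht.
have etr : \tr (((1 - t) *: A + t *: B) *m K) = (1 - t) * \tr (A *m K) + t * \tr (B *m K).
  by rewrite mulmxDl -!scalemxAl mxtraceD !mxtraceZ.
rewrite /dual_obj etr; split; first nra.
by move=> /c2 h; nra.
Qed.

Lemma prod_le_factor (I : finType) (F : I -> R) i0 : (forall i, 0 < F i <= 1) ->
  0 < \prod_i F i <= F i0.
Proof.
move=> hF; apply/andP; split.
  by apply: prodr_gt0 => i _; case/andP: (hF i).
rewrite (bigD1 i0) //= ler_piMr //; first by case/andP: (hF i0) => h _; exact: ltW.
apply: prodr_ile1 => i _; case/andP: (hF i) => h1 h2; by rewrite ltW.
Qed.

End Helpers.

Unset Implicit Arguments.

Theorem corollary5p2 (R : realType) (d : nat) (E : rel 'I_d) (S Khat Scheck : 'M[R]_d) :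
  undirected E ->
  possemidef S ->
  is_MLE_M E S Khat ->
  is_argmin (in_A E) (dual_obj Khat) Scheck ->
  is_argmin (in_B (supp_graph Scheck)) (dual_obj Khat) Scheck /\
  (forall Sigma, is_argmin (in_B (supp_graph Scheck)) (dual_obj Khat) Sigma ->
     Sigma = Scheck).
Proof.
move=> _ _ _ [[pS hS] minS].
set f := dual_obj Khat.
have inB : in_B (supp_graph Scheck) Scheck.
  split => // i j ij; rewrite /supp_graph ij /=; by move/negPn/eqP.
have zer : forall Sig : 'M[R]_d, in_B (supp_graph Scheck) Sig -> forall i j, i != j ->
    Scheck i j = 0 -> Sig i j = 0.
  move=> Sig [pSig0 zS] i j ij h; apply: (zS i j ij).
  by rewrite /supp_graph ij h eqxx.
have part1 : forall Sig : 'M[R]_d, in_B (supp_graph Scheck) Sig -> f Scheck <= f Sig.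
  move=> Sig hSig; have pSig := hSig.1.
  pose g (p : 'I_d * 'I_d) := if 0 < Scheck p.1 p.2
    then Scheck p.1 p.2 / (Scheck p.1 p.2 + `|Sig p.1 p.2|) else 1.
  have hg : forall p, 0 < g p <= 1.
    move=> p; rewrite /g; case: ifP => h; last by rewrite ltr01 lexx.
    have hp : 0 < Scheck p.1 p.2 + `|Sig p.1 p.2| by rewrite ltr_pwDl.
    by rewrite divr_gt0 //= ler_pdivrMr // mul1r lerDl.
  pose t := (\prod_p g p) / 2.
  have gpos : 0 < \prod_p g p by apply: prodr_gt0 => p _; case/andP: (hg p).
  have gle1 : \prod_p g p <= 1.
    by apply: prodr_ile1 => p _; case/andP: (hg p) => h1 h2; rewrite ltW.
  have tpos : 0 < t by rewrite divr_gt0.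
  have tle : forall p, t <= g p.
    move=> p; case/andP: (prod_le_factor p hg) => h1 h2.
    by rewrite /t; apply: le_trans h2; rewrite ler_pdivrMr // ler_peMr // ?ltW //; lra.
  have t1 : t < 1.
    rewrite /t; lra.
  have ht : 0 < t < 1 by rewrite tpos t1.
  have [fc _] := fconv Khat pS pSig ht.
  have inA : in_A E ((1 - t) *: Scheck + t *: Sig).
    split; first by apply: posdef_comb => //; [rewrite subr_ge0 ltW | rewrite ltW | rewrite subrK].
    move=> i j ij Eij; rewrite !mxE.
    have := hS i j ij Eij; rewrite le_eqVlt => /orP [/eqP h0|hpos].
      by rewrite -h0 (zer Sig hSig i j ij (esym h0)) !mulr0 addr0.
    have := tle (i, j); rewrite /g /= hpos => htg.
    have hp : 0 < Scheck i j + `|Sig i j| by rewrite ltr_pwDl.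
    move: htg; rewrite ler_pdivlMr // => htg.
    have hn : - Sig i j <= `|Sig i j| by rewrite -normrN ler_norm.
    have h3 := ler_wpM2l (ltW tpos) hn.
    nra.
  have := minS _ inA; rewrite -/f => h; move: fc; rewrite -/f => fc.
  have : t * f Scheck <= t * f Sig by lra.
  by rewrite ler_pM2l.
split; first by split.
move=> Sig [hSig minSig].
apply/eqP; apply: contraT => neq.
have h1 := minSig _ inB; have h2 := part1 _ hSig.
have ht : 0 < (2 : R)^-1 < 1.
  lra.
have [_ fc] := fconv Khat hSig.1 pS ht.
have inBM : in_B (supp_graph Scheck) ((1 - 2^-1) *: Sig + 2^-1 *: Scheck).
  split; first by apply: posdef_comb => //; [exact: hSig.1 | rewrite subr_ge0 ltW // invf_lt1 // ltr1n | rewrite invr_ge0 ler0n | rewrite subrK].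
  move=> i j ij hn; rewrite !mxE.
  have h0 : Scheck i j = 0 by move: hn; rewrite /supp_graph ij /= negbK => /eqP.
  by rewrite h0 (zer Sig hSig i j ij h0) !mulr0 addr0.
have h3 := part1 _ inBM.
have := fc neq; rewrite -/f; lra.
Qed.
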